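(* Fix integers $0\le k\le n$ and $x\in\mathbb Z_{\ge0}$, and let $S$ have law $\mathbf P^n_x$. For $0\le i\le k$ and $y\ge0$ let $f(y,i)=\mathbf E^{n-i}_y[S_{k-i}]$. Then $M_i=f(S_i,i)$, $0\le i\le k$, is a martingale with respect to the natural filtration of $S$, and $|M_{i+1}-M_i|\le2$ for $0\le i\le k-1$. When $k=n$ one has explicitly $f(y,i)=-1+\frac{y+1}{\psi(y;n-i)}$.
   Context: Let $p_n(w)$ be the probability that simple symmetric random walk on $\mathbb Z$ started at $0$ is at $w$ at time $n$. For $x,y\in\mathbb Z_{\ge0}$, $p^{(1/2)}_n(x,y)=p_n(x-y)-p_n(x+y+2)$ and $\psi(x;n)=\sum_{y\ge0}p^{(1/2)}_n(x,y)$. $\mathbf P^N_y$ is the uniform probability measure on paths $(s_0,\dots,s_N)\in\mathbb Z_{\ge0}^{N+1}$ with $s_0=y$ and $|s_{i+1}-s_i|=1$; $S$ is its coordinate process and $\mathbf E^N_y$ its expectation. *)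

(* Defs.v *)
From HB Require Import structures.
From mathcomp Require Import all_boot all_order all_algebra.
Set Implicit Arguments. Unset Strict Implicit. Unset Printing Implicit Defensive.
Import Order.TTheory GRing.Theory Num.Theory.
Local Open Scope ring_scope.

(* p_n(w): probability that SRW on Z started at 0 is at w at time n. *)
Definition pn (n : nat) (w : int) : rat :=
  if odd (n + `|w|%N) || (n < `|w|%N)%N then 0
  else ('C(n, (n + `|w|%N)./2))%:R / (2%:R ^+ n).

Definition phalf (n x y : nat) : rat :=
  pn n (x%:Z - y%:Z) - pn n (x%:Z + y%:Z + 2).

(* psi(x;n) = sum_{y>=0} p^{(1/2)}_n(x,y); terms vanish for y > x+n. *)
Definition psi (x n : nat) : rat := \sum_(0 <= y < x + n + 1) phalf n x y.

(* All paths (s_0,...,s_N) in Z_{>=0}^{N+1} with s_0 = y and |s_{i+1}-s_i| = 1,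
   listed as sequences of length N+1. *)
Fixpoint walks (N y : nat) : seq (seq nat) :=
  match N with
  | 0 => [:: [:: y]]
  | N'.+1 => [seq y :: w | w <- walks N' y.+1]
             ++ (if y is y'.+1 then [seq y :: w | w <- walks N' y'] else [::])
  end.

Definition Ewalk (N y : nat) (F : seq nat -> rat) : rat :=
  (\sum_(w <- walks N y) F w) / (size (walks N y))%:R.

Definition Scoord (m : nat) (w : seq nat) : nat := nth 0%N w m.

(* Conditional expectation under P^N_y of F given (S_0,...,S_{size p - 1}) = p. *)
Definition cond_exp (N y : nat) (F : seq nat -> rat) (p : seq nat) : rat :=
  (\sum_(w <- walks N y | take (size p) w == p) F w)
    / (count (fun w => take (size p) w == p) (walks N y))%:R.

(* (M_i)_{0<=i<=k} is a martingale w.r.t. the natural filtration of S under P^n_x: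
   M_i is a function of (S_0..S_i), and E[M_{i+1} | S_0..S_i] = M_i. *)
Definition martingale_walks (n x k : nat) (M : nat -> seq nat -> rat) : Prop :=
  (forall i w w', (i <= k)%N -> w \in walks n x -> w' \in walks n x ->
     take i.+1 w = take i.+1 w' -> M i w = M i w')
  /\ (forall i w, (i < k)%N -> w \in walks n x ->
     cond_exp n x (M i.+1) (take i.+1 w) = M i w).

Definition fexp (n k y i : nat) : rat :=
  Ewalk (n - i) y (fun w => (Scoord (k - i) w)%:R).

(* Main.v *)
Require Import Defs.
From HB Require Import structures.
From mathcomp Require Import all_boot all_order all_algebra.
From mathcomp Require Import zify ring lra.
Import Order.TTheory GRing.Theory Num.Theory.
Local Open Scope ring_scope.
Set Implicit Arguments. Unset Strict Implicit.

Lemma walks_shape N y w : w \in walks N y -> size w = N.+1 /\ nth 0%N w 0 = y.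
Proof.
elim: N y w => [|N IH] y w /=; first by rewrite inE => /eqP ->.
rewrite mem_cat => /orP [].
  by case/mapP => u /IH [h1 _] ->; rewrite /= h1.
case: y => [|y]; first by [].
by case/mapP => u /IH [h1 _] ->; rewrite /= h1.
Qed.

Lemma walks_step N y w j : w \in walks N y -> (j < N)%N ->
  nth 0%N w j.+1 = (nth 0%N w j).+1 \/ (0 < nth 0%N w j /\ nth 0%N w j.+1 = (nth 0%N w j).-1)%N.
Proof.
elim: N y w j => [|N IH] y w j //=.
rewrite mem_cat => /orP [].
  case/mapP => u hu -> hj; case: j hj => [|j] hj /=.
    by left; rewrite (walks_shape hu).2.
  by apply: (IH _ _ _ hu).
case: y => [|y]; first by [].
case/mapP => u hu -> hj; case: j hj => [|j] hj /=.
  by right; rewrite (walks_shape hu).2.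
by apply: (IH _ _ _ hu).
Qed.

Definition Nw N y := size (walks N y).
Definition Aw N t y : rat := \sum_(w <- walks N y) (nth 0%N w t)%:R.
Definition fA N t y : rat := Aw N t y / (Nw N y)%:R.

Lemma sum_walksS (F : seq nat -> rat) N y :
  \sum_(w <- walks N.+1 y) F w = \sum_(u <- walks N y.+1) F (y :: u)
     + (if y is y'.+1 then \sum_(u <- walks N y') F (y' .+1 :: u) else 0).
Proof. by rewrite /= big_cat big_map; case: y => [|y] /=; rewrite ?big_nil ?big_map ?addr0. Qed.

Lemma NwS N y : Nw N.+1 y = (Nw N y.+1 + (if y is y'.+1 then Nw N y' else 0))%N.
Proof. by rewrite /Nw /= size_cat size_map; case: y => [|y] //=; rewrite size_map. Qed.

Lemma Nw0 y : Nw 0 y = 1%N. Proof. by []. Qed.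

Lemma Nw_pos N y : (0 < Nw N y)%N.
Proof. elim: N y => [|N IH] y //; rewrite NwS; have := IH y.+1; lia. Qed.

Lemma Nw_neq0 N y : (Nw N y)%:R != 0 :> rat.
Proof. by rewrite pnatr_eq0 -lt0n Nw_pos. Qed.

Lemma AwS N t y : Aw N.+1 t.+1 y = Aw N t y.+1 + (if y is y'.+1 then Aw N t y' else 0).
Proof. by rewrite /Aw sum_walksS; case: y. Qed.

Lemma sum_const_seq (s : seq (seq nat)) (c : rat) : \sum_(w <- s) c = (size s)%:R * c.
Proof. elim: s => [|a s IH]; first by rewrite big_nil mul0r. by rewrite big_cons IH /= -add1n natrD mulrDl mul1r. Qed.

Lemma sum_head (g : nat -> rat) N z : \sum_(u <- walks N z) g (nth 0%N u 0) = (Nw N z)%:R * g z.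
Proof.
rewrite big_seq (eq_bigr (fun _ => g z)) -?big_seq ?sum_const_seq //.
by move=> u /walks_shape [_ ->].
Qed.

Lemma Aw0 N y : Aw N 0 y = (Nw N y)%:R * y%:R.
Proof. by rewrite /Aw (sum_head (fun z => z%:R)). Qed.

Lemma AwE N t y : Aw N t y = (Nw N y)%:R * fA N t y.
Proof. by rewrite /fA mulrC divfK // Nw_neq0. Qed.

Lemma noprefix N b b' u0 j : u0 \in walks N b' -> b != b' ->
  [seq u <- walks N b | take j.+1 u == take j.+1 u0] = [::].
Proof.
move=> hu0 hb; apply/eqP; rewrite -(negbK (_ == [::])) -has_filter; apply/hasPn => u hu.
apply/negP => /eqP e; have := congr1 (fun s => nth 0%N s 0) e.
by rewrite /= !nth_take // (walks_shape hu).2 (walks_shape hu0).2 => ee; rewrite ee eqxx in hb.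
Qed.

Lemma walks_prefix N y w0 j : w0 \in walks N y -> (j <= N)%N ->
  [seq w <- walks N y | take j.+1 w == take j.+1 w0]
  = [seq take j w0 ++ u | u <- walks (N - j) (nth 0%N w0 j)].
Proof.
elim: j N y w0 => [|j IH] N y w0 hw0 hj.
  rewrite take0 subn0 (walks_shape hw0).2 map_id.
  have t1 : forall w, w \in walks N y -> take 1 w = [:: y].
    move=> w hw; case: w hw => [|a u] hw; first by have := (walks_shape hw).1.
    by rewrite /= take0 -(walks_shape hw).2.
  rewrite (t1 _ hw0) (eq_in_filter (a2 := predT)) ?filter_predT //.
  by move=> w hw; rewrite t1 ?eqxx.
case: N hw0 hj => [|N] //= hw0 hj.
rewrite filter_cat filter_map.
have eP : forall u0 b, [seq u <- walks N b | preim (cons y) (fun w => take j.+2 w == take j.+2 (y :: u0)) u]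
   = [seq u <- walks N b | take j.+1 u == take j.+1 u0].
  by move=> u0 b; apply: eq_filter => u; rewrite /= eqseq_cons eqxx.
move: hw0; rewrite mem_cat => /orP [].
  case/mapP => u0 hu0 ->.
  rewrite eP (IH _ _ _ hu0) // -map_comp.
  case: y hu0 eP => [|y] hu0 eP; first by rewrite cats0.
  rewrite filter_map eP (@noprefix N _ _ u0 j hu0) ?cats0 //.
  lia.
case: y eP => [|y] eP //.
case/mapP => u0 hu0 ->.
rewrite eP (@noprefix N _ _ u0 j hu0) ?filter_map ?eP ?(IH _ _ _ hu0) // -?map_comp //.
lia.
Qed.

Lemma fexpE n k y i : fexp n k y i = fA (n - i) (k - i) y.
Proof. by []. Qed.

Lemma mart_step n k x i w : (i < k)%N -> (k <= n)%N -> w \in walks n x ->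
  cond_exp n x (fun w => fexp n k (Scoord i.+1 w) i.+1) (take i.+1 w) = fexp n k (Scoord i w) i.
Proof.
move=> hik hkn hw.
have [sw _] := walks_shape hw.
rewrite /cond_exp size_takel ?sw //; last by lia.
rewrite -big_filter -size_filter (walks_prefix hw) ?big_map ?size_map; last by lia.
rewrite fexpE /Scoord.
have -> : (n - i = (n - i.+1).+1)%N by lia.
have -> : (k - i = (k - i.+1).+1)%N by lia.
set m := (n - i.+1)%N; set t := (k - i.+1)%N; set y := nth 0%N w i.
have e : forall u, nth 0%N (take i w ++ u) i.+1 = nth 0%N u 1.
  by move=> u; rewrite nth_cat size_takel ?sw; [rewrite ltnNge leqnSn /= subSnn | lia].
under eq_bigr => u _ do rewrite e fexpE -/m -/t.
rewrite sum_walksS /= (sum_head (fun z => fA m t z)).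
rewrite /fA -[(Nw m.+1 y)]/(size _) -/(Nw m.+1 y).
congr (_ / _); rewrite AwS -!AwE; case: y => [|y] //=.
by rewrite (sum_head (fun z => fA m t z)) -AwE.
Qed.

Lemma Nw_conc m : (forall z, Nw m z.+3 + (if z is z'.+1 then Nw m z' else 0) <= 2 * Nw m z.+1)%N
   /\ (Nw m 2 <= 3 * Nw m 0)%N.
Proof.
elim: m => [|m [H2 H3]]; first by split=> // -[|z].
split; last first.
  rewrite !NwS /=; have := H2 0%N; rewrite /=; lia.
case=> [|z].
  rewrite !NwS /=; have := H2 1%N; rewrite /=; lia.
rewrite !NwS /=; have := H2 z.+2; have := H2 z; rewrite /=.
case: z => [|z] /=; rewrite ?NwS /=; lia.
Qed.

Lemma Nw_lc m z : (Nw m z.+4 * Nw m z <= Nw m z.+2 * Nw m z.+2)%N.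
Proof.
have := (Nw_conc m).1 z.+1; rewrite /=.
set a := Nw m z.+4; set b := Nw m z.+2; set c := Nw m z => h.
have h1 : ((a + c) * (a + c) <= (2 * b) * (2 * b))%N by apply: leq_mul.
have h2 : (4 * (a * c) <= (a + c) * (a + c))%N.
  case: (leqP a c) => hac.
    have -> : c = (a + (c - a))%N by lia.
    set d := (c - a)%N; nia.
  have -> : a = (c + (a - c))%N by lia.
  set d := (a - c)%N; nia.
nia.
Qed.

Lemma key (a b c F3 F1 F0 : rat) : 0 <= a -> 0 < b -> 0 <= c -> a * c <= b * b ->
  0 <= F3 - F1 <= 2 -> 0 <= F1 - F0 <= 2 ->
  0 <= (a*F3 + b*F1)/(a+b) - (b*F1 + c*F0)/(b+c) <= 2.
Proof.
move=> ha hb hc hlc /andP[g1a g1b] /andP[g0a g0b].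
have nab : a + b != 0 by rewrite gt_eqF // ltr_wpDl.
have nbc : b + c != 0 by rewrite gt_eqF // ltr_wpDr.
have pab : 0 < a + b by rewrite ltr_wpDl.
have pbc : 0 < b + c by rewrite ltr_wpDr.
set u := a / (a + b); set v := c / (b + c).
have e : (a*F3 + b*F1)/(a+b) - (b*F1 + c*F0)/(b+c) = u * (F3 - F1) + v * (F1 - F0).
  by rewrite /u /v; field; rewrite nab nbc.
have hu : 0 <= u by rewrite divr_ge0 // ltW.
have hv : 0 <= v by rewrite divr_ge0 // ltW.
have huv : 0 <= 1 - (u + v).
  have -> : 1 - (u + v) = (b * b - a * c) / ((a + b) * (b + c)).
    by rewrite /u /v; field; rewrite nab nbc.
  by rewrite divr_ge0 ?subr_ge0 // ltW // mulr_gt0.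
rewrite e; apply/andP; split; first by nra.
nra.
Qed.

Lemma key2 (b c F1 F0 : rat) : 0 < b -> 0 <= c -> 0 <= F1 - F0 <= 2 ->
  `|F1 - (b*F1 + c*F0)/(b+c)| <= 2 /\ `|F0 - (b*F1 + c*F0)/(b+c)| <= 2.
Proof.
move=> hb hc /andP[ga gb].
have nbc : b + c != 0 by rewrite gt_eqF // ltr_wpDr.
have pbc : 0 < b + c by rewrite ltr_wpDr.
set v := c / (b + c).
have hv : 0 <= v by rewrite divr_ge0 // ltW.
have hv1 : v <= 1 by rewrite ler_pdivrMr // mul1r lerDr ltW.
have e1 : F1 - (b*F1 + c*F0)/(b+c) = v * (F1 - F0) by rewrite /v; field.
have e2 : F0 - (b*F1 + c*F0)/(b+c) = - ((1 - v) * (F1 - F0)) by rewrite /v; field.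
rewrite e1 e2 normrN !ger0_norm; first split; try nra.
Qed.

Lemma fAS m t v : fA m.+1 t.+1 v =
  ((Nw m v.+1)%:R * fA m t v.+1 + (if v is v'.+1 then (Nw m v')%:R * fA m t v' else 0))
  / ((Nw m v.+1)%:R + (if v is v'.+1 then (Nw m v')%:R else 0)).
Proof. by rewrite {1}/fA AwS NwS natrD; case: v => [|v] /=; rewrite -?AwE. Qed.

Lemma fA0 m z : fA m 0 z = z%:R.
Proof. by rewrite /fA Aw0 [_ * z%:R]mulrC mulfK // Nw_neq0. Qed.

Lemma Nw_gt0r m z : 0 < (Nw m z)%:R :> rat.
Proof. by rewrite ltr0n Nw_pos. Qed.

Lemma gbound t : forall m, (t <= m)%N -> forall z, 0 <= fA m t z.+2 - fA m t z <= 2.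
Proof.
elim: t => [|t IH] m htm z.
  by rewrite !fA0 -[z.+2]addn2 natrD addrAC subrr add0r lexx.
case: m htm => [|m] // htm.
have IHm := IH m htm.
rewrite !fAS /=.
case: z => [|z].
  have := @key (Nw m 3)%:R (Nw m 1)%:R 0 (fA m t 3) (fA m t 1) (fA m t 1).
  rewrite mul0r !addr0; apply; rewrite ?ler0n ?Nw_gt0r ?mulr0 ?mul0r ?mulr_ge0 ?ler0n ?subrr ?lexx //.
  all: try apply: IHm.
apply: key; rewrite ?ler0n ?Nw_gt0r //.
all: try apply: IHm.
by rewrite -!natrM ler_nat Nw_lc.
Qed.

Lemma step_bound n k x i w : (i < k)%N -> (k <= n)%N -> w \in walks n x ->
  `|fexp n k (Scoord i.+1 w) i.+1 - fexp n k (Scoord i w) i| <= 2%:R.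
Proof.
move=> hik hkn hw.
rewrite !fexpE /Scoord.
have -> : (n - i = (n - i.+1).+1)%N by lia.
have -> : (k - i = (k - i.+1).+1)%N by lia.
have ht : (k - i.+1 <= n - i.+1)%N by lia.
have hin : (i < n)%N by lia.
have := walks_step hw hin.
set m := (n - i.+1)%N; set t := (k - i.+1)%N.
set y := nth 0%N w i; set y' := nth 0%N w i.+1.
rewrite fAS; case: y => [|y0] /=.
  case=> [-> | [//]].
  by rewrite !addr0 mulrC mulKf ?Nw_neq0 // subrr normr0 ler0n.
have [h1 h2] := key2 (Nw_gt0r m y0.+2) (ler0n _ (Nw m y0)) (gbound ht y0).
by case=> [-> | [_ ->]] /=; [exact: h1 | exact: h2].
Qed.

Lemma Aw_diag m y : Aw m m y + (Nw m y)%:R = (y.+1)%:R * 2^+m.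
Proof.
elim: m y => [|m IH] y.
  by rewrite Aw0 Nw0 mul1r expr0 mulr1 -natrD addn1.
rewrite AwS NwS natrD; case: y => [|y] /=.
  by rewrite !addr0 IH exprS mulrA.
rewrite addrACA IH IH exprS mulrA -mulrDl -!natrD -natrM; congr (_%:R * _); lia.
Qed.

Lemma pn_big m w : (m < `|w|)%N -> pn m w = 0.
Proof. by rewrite /pn => ->; rewrite orbT. Qed.

Lemma pnN m w : pn m (- w) = pn m w.
Proof. by rewrite /pn abszN. Qed.

Lemma pn_nat m a : pn m (Posz a) = if odd (m + a) then 0 else 'C(m, (m+a)./2)%:R / 2^+m.
Proof.
rewrite /pn /=; case ho: (odd (m + a)) => //=.
case: ifP => hma //=.
have := odd_double_half (m + a); rewrite ho add0n -addnn => e.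
rewrite bin_small ?mul0r //; lia.
Qed.

Lemma pnS_pos m a : pn m.+1 (Posz a.+1) = (pn m (Posz a) + pn m (Posz a.+2)) / 2.
Proof.
rewrite !pn_nat !addnS addSn /= negbK.
case: ifP => _; first by rewrite addr0 mul0r.
rewrite binS natrD exprS mulrDl; field; exact: expf_neq0.
Qed.

Lemma pnS0 m : pn m.+1 0 = pn m 1.
Proof.
rewrite !pn_nat addn0 addn1.
case: ifP => ho //.
move: ho; rewrite /= => /negbFE ho.
have := odd_double_half m; rewrite ho add1n => e.
rewrite -e /= doubleK binS exprS.
have -> : 'C((m./2).*2.+1, m./2) = 'C((m./2).*2.+1, (m./2).+1).
  rewrite -[in RHS]bin_sub; last by rewrite -addnn; lia.
  congr 'C(_, _); rewrite -addnn; lia.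
rewrite natrD; field; exact: expf_neq0.
Qed.

Lemma pnS m w : pn m.+1 w = (pn m (w - 1) + pn m (w + 1)) / 2.
Proof.
case: w => a.
  case: a => [|a].
    by rewrite pnS0 sub0r pnN add0r; field.
  have e1 : Posz a.+1 - 1 = Posz a by lia.
  have e2 : Posz a.+1 + 1 = Posz a.+2 by lia.
  by rewrite e1 e2 pnS_pos.
have e0 : Negz a = - Posz a.+1 by lia.
have e1 : Negz a - 1 = - Posz a.+2 by lia.
have e2 : Negz a + 1 = - Posz a by lia.
by rewrite e1 e2 e0 !pnN pnS_pos addrC.
Qed.

Lemma phalfS m y z : phalf m.+1 y z = (phalf m y.+1 z + (if y is y'.+1 then phalf m y' z else 0)) / 2.
Proof.
rewrite /phalf !pnS; case: y => [|y].
  have -> : (Posz 0 - Posz z - 1) = - (Posz 0 + Posz z + 2 - 1) by lia.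
  have -> : (Posz 0 - Posz z + 1) = Posz 1 - Posz z by lia.
  have -> : (Posz 0 + Posz z + 2 + 1) = Posz 1 + Posz z + 2 by lia.
  by rewrite pnN; field.
have -> : (Posz y.+1 - Posz z - 1) = Posz y - Posz z by lia.
have -> : (Posz y.+1 - Posz z + 1) = Posz y.+2 - Posz z by lia.
have -> : (Posz y.+1 + Posz z + 2 + 1) = Posz y.+2 + Posz z + 2 by lia.
have -> : (Posz y.+1 + Posz z + 2 - 1) = Posz y + Posz z + 2 by lia.
by field.
Qed.

Lemma phalf_big m y z : (y + m < z)%N -> phalf m y z = 0.
Proof.
move=> h; rewrite /phalf.
have -> : Posz y - Posz z = - Posz (z - y)%N by lia.
have -> : Posz y + Posz z + 2 = Posz (y + z + 2)%N by lia.
by rewrite pnN !pn_big ?subrr //=; lia.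
Qed.

Lemma psi_ext m y L : (y + m + 1 <= L)%N -> \sum_(0 <= z < L) phalf m y z = psi y m.
Proof.
move=> h; rewrite /psi (big_cat_nat (leq0n _) h) /= [X in _ + X]big1_seq ?addr0 //.
move=> z /andP[_]; rewrite mem_index_iota => /andP[hz _]; apply: phalf_big; lia.
Qed.

Lemma psiS m y : psi y m.+1 = (psi y.+1 m + (if y is y'.+1 then psi y' m else 0)) / 2.
Proof.
rewrite -(@psi_ext m.+1 y (y + m + 3)); last by lia.
under eq_bigr => z _ do rewrite phalfS.
rewrite -big_distrl big_split /= psi_ext; last by lia.
case: y => [|y]; first by rewrite big1 // addr0.
by rewrite psi_ext //; lia.
Qed.

Lemma psi0 y : psi y 0 = 1.
Proof.
rewrite /psi addn0 addn1 big_nat_recr //= big1_seq ?add0r.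
  rewrite /phalf subrr [pn 0 (Posz y + _ + _)]pn_big; last by rewrite /=; lia.
  by rewrite /pn /= expr0 divr1 subr0.
move=> z /andP[_]; rewrite mem_index_iota => /andP[_ hz].
rewrite /phalf !pn_big ?subrr //.
  have -> : Posz y + Posz z + 2 = Posz (y + z + 2)%N by lia.
  by rewrite /=; lia.
have -> : Posz y - Posz z = Posz (y - z)%N by lia.
by rewrite /=; lia.
Qed.

Lemma Nw_psi m y : (Nw m y)%:R = psi y m * 2 ^+ m.
Proof.
elim: m y => [|m IH] y; first by rewrite Nw0 psi0 mulr1.
rewrite NwS natrD psiS IH exprS; case: y => [|y] /=.
  by rewrite !addr0; field.
by rewrite IH; field.
Qed.

Unset Implicit Arguments.

Theorem propositionA6 (n k x : nat) (hkn : (k <= n)%N) :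
  martingale_walks n x k (fun i w => fexp n k (Scoord i w) i)
  /\ (forall i w, (i < k)%N -> w \in walks n x ->
        `|fexp n k (Scoord i.+1 w) i.+1 - fexp n k (Scoord i w) i| <= 2%:R)
  /\ (k = n -> forall i y, (i <= k)%N ->
        fexp n k y i = -1 + (y.+1)%:R / psi y (n - i)).
Proof.
split; [split|split].
- move=> i w w' hik hw hw' e; rewrite /Scoord.
  by rewrite -(nth_take 0%N (ltnSn i) w) e nth_take.
- move=> i w hik hw; exact: (mart_step hik hkn hw).
- move=> i w hik hw; exact: (step_bound hik hkn hw).
move=> ekn i y hi; subst k.
rewrite fexpE /fA.
set m := (n - i)%N.
have hA := Aw_diag m y; have hN := Nw_psi m y.
have hN0 := Nw_neq0 m y.
have h2 : (2 ^+ m : rat) != 0 by exact: expf_neq0.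
have hp : psi y m = (Nw m y)%:R / 2 ^+ m by rewrite hN mulfK.
have -> : Aw m m y = (y.+1)%:R * 2 ^+ m - (Nw m y)%:R by rewrite -hA addrK.
rewrite hp; field; by rewrite hN0 h2.
Qed.
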